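(* Let $m\ge2$ and let $\mathbf v=(v_1,\dots,v_m)$ and $\mathbf k=(k_1,\dots,k_m)$ be $m$-tuples of positive integers with $k_i\le v_i$ for all $i$ and $k_1\ge2$, $k_2\ge2$. Let $\mathcal D$ be a ${\rm GC}(\mathbf v,\mathbf k,2)$ on pairwise disjoint point sets $X_1,\dots,X_m$, and put $\mathbf v^+=(v_1+v_2,v_3,\dots,v_m)$ and $\mathbf k^+=(k_1+k_2,k_3,\dots,k_m)$. For each block $\mathbf B=(B_1,\dots,B_m)\in\mathcal D$ let $\mathbf B^+=(B_1\cup B_2,B_3,\dots,B_m)$, and let $\mathcal D^+=\{\mathbf B^+:\mathbf B\in\mathcal D\}$ (as a family indexed by $\mathcal D$). Then $\mathcal D^+$ is a ${\rm GC}(\mathbf v^+,\mathbf k^+,2)$ on the point sets $(X_1\cup X_2,X_3,\dots,X_m)$, and consequently $C(\mathbf v^+,\mathbf k^+,2)\le C(\mathbf v,\mathbf k,2)$.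
   Context: For tuples $\mathbf a,\mathbf b$ of positive integers of the same length $p$ with $\mathbf b\le\mathbf a$ entrywise, and pairwise disjoint sets $Y_1,\dots,Y_p$ with $|Y_i|=a_i$: a block is a $p$-tuple $(B_1,\dots,B_p)$ with $B_i\subseteq Y_i$, $|B_i|=b_i$; a $p$-tuple of sets $(T_1,\dots,T_p)$ is $(\mathbf a,\mathbf b,2)$-admissible if $T_i\subseteq Y_i$, $|T_i|\le b_i$ and $\sum|T_i|=2$, and is contained in a block if $T_i\subseteq B_i$ for all $i$. A ${\rm GC}(\mathbf a,\mathbf b,2)$ is a finite family (repetitions allowed) of blocks containing every admissible tuple in at least one block; $C(\mathbf a,\mathbf b,2)$ is the minimum number of blocks. *)

(* Defs.v *)
(* Tuples are represented as sequences; the i-th coordinate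
   (0-based) of a tuple s is nth _ s i. *)
From mathcomp Require Import all_boot.
Set Implicit Arguments. Unset Strict Implicit. Unset Printing Implicit Defensive.

Section GC.
Variable T : finType.

Definition point_sets (a : seq nat) (Y : seq {set T}) : Prop :=
  size Y = size a /\
  (forall i, i < size Y -> #|nth set0 Y i| = nth 0 a i) /\
  (forall i j, i < size Y -> j < size Y -> i != j ->
     [disjoint nth set0 Y i & nth set0 Y j]).

Definition is_block (Y : seq {set T}) (b : seq nat) (B : seq {set T}) : Prop :=
  size B = size Y /\
  forall i, i < size Y -> nth set0 B i \subset nth set0 Y i /\
                          #|nth set0 B i| = nth 0 b i.

Definition admissible2 (Y : seq {set T}) (b : seq nat) (U : seq {set T}) : Prop :=
  size U = size Y /\
  (forall i, i < size Y -> nth set0 U i \subset nth set0 Y i /\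
                           #|nth set0 U i| <= nth 0 b i) /\
  sumn [seq #|Z| | Z : {set T} <- U] = 2.

Definition contained_in (U B : seq {set T}) : Prop :=
  forall i, i < size U -> nth set0 U i \subset nth set0 B i.

(* D is a GC(a,b,2) on the point sets Y (a family with repetitions = a seq) *)
Definition is_GC (Y : seq {set T}) (b : seq nat) (D : seq (seq {set T})) : Prop :=
  size b = size Y /\
  (forall B, B \in D -> is_block Y b B) /\
  (forall U, admissible2 Y b U -> exists2 B, B \in D & contained_in U B).

End GC.

Definition is_C (a b : seq nat) (n : nat) : Prop :=
  (exists (T : finType) (Y : seq {set T}) (D : seq (seq {set T})),
      [/\ point_sets a Y, is_GC Y b D & size D = n]) /\
  (forall (T : finType) (Y : seq {set T}) (D : seq (seq {set T})),
      point_sets a Y -> is_GC Y b D -> n <= size D).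

Definition plusN (s : seq nat) : seq nat :=
  match s with x :: y :: r => (x + y) :: r | _ => s end.

Definition plusS (T : finType) (s : seq {set T}) : seq {set T} :=
  match s with x :: y :: r => (x :|: y) :: r | _ => s end.

(* Main.v *)
Require Import Defs.
From mathcomp Require Import all_boot.
From mathcomp Require Import zify.

Lemma cardU_dis (T : finType) (A B : {set T}) : [disjoint A & B] -> #|A :|: B| = #|A| + #|B|.
Proof. move=> h; by rewrite cardsU (disjoint_setI0 h) cards0 subn0. Qed.
Lemma disU (T : finType) (A B C : {set T}) : [disjoint A & C] -> [disjoint B & C] -> [disjoint A :|: B & C].
Proof. rewrite -!setI_eq0 setIUl => /eqP -> /eqP ->. by rewrite setU0. Qed.

Lemma main_ps (T : finType) a b rv (x y : {set T}) r :
  point_sets (a::b::rv) (x::y::r) -> point_sets ((a+b)::rv) ((x:|:y)::r).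
Proof.
move=> [/= hs [hc hd]]; split; first by move: hs => /= [->].
split.
  case=> [|i] /= hi.
  - rewrite cardU_dis; first by rewrite (hc 0) // (hc 1).
    exact: (hd 0 1).
  - exact: (hc i.+2).
have hU : forall j, j < size r -> [disjoint x :|: y & nth set0 r j].
  by move=> j hj; apply: disU; [apply: (hd 0 j.+2) | apply: (hd 1 j.+2)].
case=> [|i] [|j] //= hi hj hij.
- exact: hU.
- by rewrite disjoint_sym; apply: hU.
- exact: (hd i.+2 j.+2).
Qed.

Lemma main_gc (T : finType) a b rv c d rk (x y : {set T}) r D :
  2 <= c -> 2 <= d ->
  point_sets (a::b::rv) (x::y::r) -> is_GC (x::y::r) (c::d::rk) D ->
  is_GC ((x:|:y)::r) ((c+d)::rk) [seq plusS B | B <- D].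
Proof.
move=> hc2 hd2 [_ [_ hd]] [/= hsz [hbl hcov]].
have hxy : [disjoint x & y] by exact: (hd 0 1).
split; first by move: hsz => /= [->].
split.
  move=> B' /mapP [B hB ->].
  have [/= hBs hBi] := hbl B hB.
  case: B hB hBs hBi => [|B1 [|B2 rB]] //= hB [hBs] hBi.
  split; first by rewrite /= hBs.
  case=> [|i] /= hi.
  - have [s1 c1] := hBi 0 erefl. have [s2 c2] := hBi 1 erefl.
    split; first by rewrite setUSS.
    rewrite cardU_dis ?c1 ?c2 //.
    exact: (disjointWl s1 (disjointWr s2 hxy)).
  - exact: (hBi i.+2).
move=> U [/= hUs [hUi hsum]].
case: U hUs hUi hsum => [|U1 rU] //= [hUs] hUi hsum.
have [s1 c1] := hUi 0 erefl.
have hU1 : #|U1| <= 2 by lia.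
have e1 : U1 = (U1 :&: x) :|: (U1 :&: y) by rewrite -setIUr; apply/esym/setIidPl.
have dxy : [disjoint U1 :&: x & U1 :&: y].
  rewrite -setI_eq0 setIACA setIid; move: hxy; rewrite -setI_eq0 => /eqP ->.
  by rewrite setI0.
have hadm : admissible2 (x::y::r) (c::d::rk) ((U1 :&: x) :: (U1 :&: y) :: rU).
  split; first by rewrite /= hUs.
  split.
    case=> [|[|i]] /= hi.
    - rewrite subsetIr; split => //. apply: leq_trans (subset_leq_card (subsetIl _ _)) _; lia.
    - rewrite subsetIr; split => //. apply: leq_trans (subset_leq_card (subsetIl _ _)) _; lia.
    - exact: (hUi i.+1).
  by rewrite /= addnA -cardU_dis // -e1.
have [B hB hcont] := hcov _ hadm.
exists (plusS B); first by apply: map_f.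
have [/= hBs _] := hbl B hB.
case: B hB hcont hBs => [|B1 [|B2 rB]] //= hB hcont hBs.
case=> [|i] /= hi.
- rewrite e1; apply: setUSS; [exact: (hcont 0) | exact: (hcont 1)].
- exact: (hcont i.+2).
Qed.

Lemma main_all {T : finType} {v k : seq nat} {X : seq {set T}} {D} :
  2 <= size v -> size k = size v -> 2 <= nth 0 k 0 -> 2 <= nth 0 k 1 ->
  point_sets v X -> is_GC X k D ->
  point_sets (plusN v) (plusS X) /\
  is_GC (plusS X) (plusN k) [seq plusS B | B <- D].
Proof.
move=> hv hk hk0 hk1 hps hgc.
have hX : size X = size v by case: hps.
case: v hv hk hX hps hgc => [|a [|b rv]] //= _.
case: k hk0 hk1 => [|c [|d rk]] //= hc hd [hk].
case: X => [|x [|y r]] //= _ hps hgc.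
split; [exact: main_ps hps | exact: main_gc hc hd hps hgc].
Qed.

Theorem proposition3p22 (m : nat) (v k : seq nat) (T : finType)
    (X : seq {set T}) (D : seq (seq {set T})) :
  2 <= m -> size v = m -> size k = m ->
  (forall i, i < m -> 0 < nth 0 k i) ->
  (forall i, i < m -> nth 0 k i <= nth 0 v i) ->
  2 <= nth 0 k 0 -> 2 <= nth 0 k 1 ->
  point_sets v X -> is_GC X k D ->
  [/\ point_sets (plusN v) (plusS X),
      is_GC (plusS X) (plusN k) [seq plusS B | B <- D]
    & forall n n', is_C v k n -> is_C (plusN v) (plusN k) n' -> n' <= n].
Proof.
move=> hm hv hk _ _ hk0 hk1 hps hgc.
have hv2 : 2 <= size v by rewrite hv.
have hkv : size k = size v by rewrite hv hk.
have [h1 h2] := main_all hv2 hkv hk0 hk1 hps hgc.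
split => // n n' [[T' [Y [D' [hps' hgc' <-]]]] _] [_ hmin].
have [h1' h2'] := main_all hv2 hkv hk0 hk1 hps' hgc'.
by have := hmin _ _ _ h1' h2'; rewrite size_map.
Qed.
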